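(* Consider the simultaneous block-fading binary symmetric wiretap channel with parameters $q_1\in[0,1]$, $q_2=1-q_1$, and crossover probabilities satisfying $p_1\le p_2\le 0.5$, $p_1^*\le p_2^*\le 0.5$, $p_1\le p_1^*$, $p_2\le p_2^*$. Its secrecy capacity with channel state information available only at the decoders satisfies $$C^s_{\textrm{CSI-D}}\le q_1[H(p_1^* )-H(p_1)]+q_2[H(p_2^* )-H(p_2)].$$
   Context: $H(p)=-p\log_2 p-(1-p)\log_2(1-p)$ is the binary entropy function, and BSC$(p)$ denotes the binary symmetric channel with crossover probability $p$. Simultaneous block-fading binary symmetric wiretap channel: the transmitter (Alice) sends $NB$ binary symbols $X_{1:NB}$ organized in $B$ fading blocks of length $N$. Each block $k$ has a fading state $S_k\in\{1,2\}$, constant within the block, with $\Pr(S_k=1)=q_1$, $\Pr(S_k=2)=q_2$, states independent across blocks. Within block $k$, the legitimate receiver (Bob) observes the output $Y$ of $N$ independent uses of BSC$(p_{S_k})$, and the eavesdropper (Eve) observes the output $Z$ of $N$ independent uses of BSC$(p^*_{S_k})$ (same state for both, i.e. simultaneous fading). Let $\mathsf{S}=(S_1,\dots,S_B)$. A code consists of a (possibly randomized) encoder $X_{1:NB}=f(\mathsf{M})$ of a uniformly distributed message $\mathsf{M}$, which knows only the state distribution (not the realizations), and a decoder $\hat{\mathsf{M}}=g(Y_{1:NB},\mathsf{S})$ that knows the states; its rate is $\frac{1}{NB}\log_2$ of the message-set size. A rate $R$ is achievable if there are such codes of rate at least $R$ (asymptotically) with $N,B\to\infty$ such that $\Pr\{\mathsf{M}\ne\hat{\mathsf{M}}\}\to0$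 (reliability) and $\frac{1}{NB}I(\mathsf{M};Z_{1:NB}\mid\mathsf{S})\to 0$ (weak secrecy). $C^s_{\textrm{CSI-D}}$ is the supremum of achievable rates. *)

(* Defs.v *)
From HB Require Import structures.
From mathcomp Require Import all_boot all_order all_algebra.
From mathcomp Require Import all_classical all_reals all_analysis.
Set Implicit Arguments. Unset Strict Implicit. Unset Printing Implicit Defensive.
Import Order.TTheory GRing.Theory Num.Theory.
Local Open Scope ring_scope.
Local Open Scope classical_set_scope.

Section BFWiretap.
Variable R : realType.

Definition log2 (x : R) : R := ln x / ln 2.

Definition xlog2x (x : R) : R := if x == 0 then 0 else x * log2 x.

Definition Hb (p : R) : R := - xlog2x p - xlog2x (1 - p).

(** Fading states: [false] = state 1, [true] = state 2. *)
Definition st_prob (q1 : R) (s : bool) : R := if s then 1 - q1 else q1.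
Definition xover (pa pb : R) (s : bool) : R := if s then pb else pa.

(** NB symbols, organised in B blocks of length N: symbol (k, j) is the
    j-th symbol of block k. *)
Definition word (N B : nat) := {ffun 'I_B * 'I_N -> bool}.
Definition states (B : nat) := {ffun 'I_B -> bool}.

Definition Pstate (q1 : R) B (s : states B) : R :=
  \prod_(k : 'I_B) st_prob q1 (s k).

(** Transition probability of the block-fading BSC: within block k,
    N independent uses of BSC(p_{s_k}), with p_1 = pa and p_2 = pb. *)
Definition Wbf (pa pb : R) N B (s : states B) (x y : word N B) : R :=
  \prod_(i : 'I_B * 'I_N)
     (if x i == y i then 1 - xover pa pb (s i.1) else xover pa pb (s i.1)).

(** A code: a randomized encoder (a probability distribution on the NB
    channel inputs for each message, not depending on the states) and a
    decoder that sees Bob's output and the state sequence. *)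
Record code (N B M : nat) := Code {
  enc : 'I_M -> word N B -> R;
  enc_ge0 : forall m x, 0 <= enc m x;
  enc_sum1 : forall m, \sum_(x : word N B) enc m x = 1;
  dec : word N B -> states B -> 'I_M }.

Definition rate (N B M : nat) : R := log2 M%:R / (N * B)%:R.

Definition err_prob (q1 p1 p2 : R) N B M (c : code N B M) : R :=
  \sum_(m : 'I_M) \sum_(s : states B) \sum_(x : word N B) \sum_(y : word N B)
    (M%:R)^-1 * Pstate q1 s * enc c m x * Wbf p1 p2 s x y
      * (dec c y s != m)%:R.

Definition PZ (ps1 ps2 : R) N B M (c : code N B M) (m : 'I_M) (s : states B)
  (z : word N B) : R :=
  \sum_(x : word N B) enc c m x * Wbf ps1 ps2 s x z.

Definition PZs (ps1 ps2 : R) N B M (c : code N B M) (s : states B)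
  (z : word N B) : R :=
  (M%:R)^-1 * \sum_(m : 'I_M) PZ ps1 ps2 c m s z.

Definition ilog (a b : R) : R := if a == 0 then 0 else a * log2 (a / b).

(** I(M ; Z_{1:NB} | S) in bits, for a uniform message *)
Definition leakage (q1 ps1 ps2 : R) N B M (c : code N B M) : R :=
  \sum_(s : states B) Pstate q1 s *
    \sum_(m : 'I_M) \sum_(z : word N B)
       (M%:R)^-1 * ilog (PZ ps1 ps2 c m s z) (PZs ps1 ps2 c s z).

(** R is an achievable secrecy rate: there are codes with N, B -> oo whose
    rates are asymptotically at least R, with vanishing error probability
    and vanishing normalized leakage (weak secrecy). *)
Definition achievable (q1 p1 p2 ps1 ps2 : R) (r : R) : Prop :=
  forall eps : R, 0 < eps -> forall N0 B0 : nat,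
    exists N B M : nat, exists c : code N B M,
      [/\ (N0 <= N)%N, (B0 <= B)%N & (0 < M)%N] /\
      [/\ r - eps <= rate N B M,
           err_prob q1 p1 p2 c <= eps &
           leakage q1 ps1 ps2 c / (N * B)%:R <= eps].

Definition CsCSID (q1 p1 p2 ps1 ps2 : R) : \bar R :=
  ereal_sup [set (r%:E)%E | r in achievable q1 p1 p2 ps1 ps2].

End BFWiretap.

(* Main.v *)
Require Import Defs.
From HB Require Import structures.
From mathcomp Require Import all_boot all_order all_algebra.
From mathcomp Require Import all_classical all_reals all_analysis.
From mathcomp Require Import ring lra.
Import Order.TTheory GRing.Theory Num.Theory.
Local Open Scope ring_scope.

Lemma ln2_gt0 {R : realType} : 0 < ln (2 : R).
Proof. by apply: ln_gt0; rewrite ltr1n. Qed.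

Lemma ilogE {R : realType} (a b : R) : ilog a b = a * log2 (a / b).
Proof. by rewrite /ilog; case: eqP => [->|]; rewrite ?mul0r. Qed.

Lemma xlog2xE {R : realType} (x : R) : xlog2x x = x * log2 x.
Proof. by rewrite /xlog2x; case: eqP => [->|]; rewrite ?mul0r. Qed.

Lemma log2M {R : realType} (a b : R) : 0 < a -> 0 < b ->
  log2 (a * b) = log2 a + log2 b.
Proof. by move=> ha hb; rewrite /log2 lnM ?posrE // mulrDl. Qed.

Lemma log2D {R : realType} (a b : R) : 0 < a -> 0 < b ->
  log2 (a / b) = log2 a - log2 b.
Proof. by move=> ha hb; rewrite /log2 ln_div ?posrE // mulrBl. Qed.

Lemma log2_1 {R : realType} : log2 (1 : R) = 0.
Proof. by rewrite /log2 ln1 mul0r. Qed.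

Lemma log2_2 {R : realType} : log2 (2 : R) = 1.
Proof. by rewrite /log2 divff // gt_eqF // ln2_gt0. Qed.

Lemma log2_le {R : realType} {a : R} : 0 < a -> log2 a <= (a - 1) / ln 2.
Proof.
move=> ha; rewrite /log2 ler_pM2r ?invr_gt0 ?ln2_gt0 //.
have := @le_ln1Dx R (a - 1); rewrite addrCA subrr addr0; apply.
by rewrite ltrBrDl subrr.
Qed.

Lemma log2_le0 {R : realType} (a : R) : a <= 1 -> log2 a <= 0.
Proof.
move=> ha; rewrite /log2 pmulr_lle0 ?invr_gt0 ?ln2_gt0 //. exact: ln_le0.
Qed.

Lemma ilog_pt {R : realType} {a b x : R} : 0 <= a -> 0 <= b ->
  (a != 0 -> b != 0) -> 0 < x ->
  a * log2 x + (a - b * x) / ln 2 <= ilog a b.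
Proof.
move=> a0 b0 ab x0; have l2 := @ln2_gt0 R.
have [->|an0] := eqVneq a 0.
  rewrite /ilog eqxx mul0r add0r sub0r mulNr oppr_le0.
  by apply: divr_ge0 => //; [apply: mulr_ge0 => //; exact: ltW|exact: ltW].
have bn0 := ab an0.
have ap : 0 < a by rewrite lt_def an0.
have bp : 0 < b by rewrite lt_def bn0.
rewrite ilogE.
set t := b * x / a.
have tp : 0 < t by rewrite /t divr_gt0 // mulr_gt0.
have e : a / b = x / t.
  rewrite /t; field; rewrite ?gt_eqF //; exact: mulr_gt0.
rewrite e log2D //.
have := log2_le tp => h.
have : a * log2 t <= a * ((t - 1) / ln 2) by rewrite ler_pM2l.
have -> : a * ((t - 1) / ln 2) = (b * x - a) / ln 2.
  rewrite /t; field; rewrite ?gt_eqF //.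
move=> h2.
rewrite mulrBr.
have -> : (a - b * x) / ln 2 = - ((b * x - a) / ln 2) by field; rewrite gt_eqF.
by rewrite lerD2l lerN2.
Qed.

Lemma logsum {R : realType} (I : finType) (a b : I -> R) :
  (forall i, 0 <= a i) -> (forall i, 0 <= b i) ->
  (forall i, a i != 0 -> b i != 0) ->
  ilog (\sum_i a i) (\sum_i b i) <= \sum_i ilog (a i) (b i).
Proof.
move=> a0 b0 ab.
have A0 : 0 <= \sum_i a i by apply: sumr_ge0.
have B0 : 0 <= \sum_i b i by apply: sumr_ge0.
have [Ae|An0] := eqVneq (\sum_i a i) 0.
  have az := psumr_eq0P (fun i _ => a0 i) Ae.
  rewrite Ae /ilog eqxx big1 // => i _; by rewrite az ?eqxx.
have [Be|Bn0] := eqVneq (\sum_i b i) 0.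
  have bz := psumr_eq0P (fun i _ => b0 i) Be.
  case/eqP: An0; apply: big1 => i _; apply/eqP; apply: contraT => /ab.
  by rewrite bz ?eqxx.
have Ap : 0 < \sum_i a i by rewrite lt_def An0.
have Bp : 0 < \sum_i b i by rewrite lt_def Bn0.
set x := (\sum_i a i) / (\sum_i b i).
have xp : 0 < x by rewrite divr_gt0.
apply: le_trans (ler_sum _ (fun i _ => ilog_pt (a0 i) (b0 i) (ab i) xp)).
rewrite big_split /= -mulr_suml -mulr_suml sumrB -mulr_suml.
have -> : (\sum_i b i) * x = \sum_i a i by rewrite /x mulrC -mulrA mulVf // mulr1.
by rewrite subrr mul0r addr0 ilogE.
Qed.


Lemma ilogZ {R : realType} {c a b : R} : 0 <= c -> ilog (c * a) (c * b) = c * ilog a b.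
Proof.
move=> c0; rewrite !ilogE; have [->|cn0] := eqVneq c 0; first by rewrite !mul0r.
have -> : c * a / (c * b) = a / b by rewrite invfM mulrACA divff // mul1r.
by rewrite mulrA.
Qed.

Lemma sum_ge_term {R : realType} {I : finType} (F : I -> R) i :
  (forall j, 0 <= F j) -> F i <= \sum_j F j.
Proof. by move=> F0; rewrite (bigD1 i) //= lerDl sumr_ge0. Qed.

Lemma sum_supp {R : realType} {I : finType} (a b : I -> R) :
  (forall i, 0 <= a i) -> (forall i, 0 <= b i) ->
  (forall i, a i != 0 -> b i != 0) ->
  \sum_i a i != 0 -> \sum_i b i != 0.
Proof.
move=> a0 b0 ab An0; apply/eqP => Be.
have bz := psumr_eq0P (fun i _ => b0 i) Be.
case/eqP: An0; apply: big1 => i _; apply/eqP; apply: contraT => /ab.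
by rewrite bz ?eqxx.
Qed.

Definition ent {R : realType} {T : finType} (u : T -> R) := - \sum_y xlog2x (u y).

Lemma ent_dstoch {R : realType} {T : finType} (u : T -> R) (K : T -> T -> R) :
  (forall y, 0 <= u y) -> (forall y z, 0 <= K y z) ->
  (forall y, \sum_z K y z = 1) -> (forall z, \sum_y K y z = 1) ->
  \sum_z xlog2x (\sum_y u y * K y z) <= \sum_y xlog2x (u y).
Proof.
move=> u0 K0 Kr Kc.
have h z : xlog2x (\sum_y u y * K y z) <= \sum_y K y z * xlog2x (u y).
  have -> : xlog2x (\sum_y u y * K y z) =
      ilog (\sum_y K y z * u y) (\sum_y K y z * 1).
    by rewrite ilogE xlog2xE !(eq_bigr _ (fun y _ => mulr1 _)) Kc divr1;
       under eq_bigr do rewrite mulrC.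
  apply: le_trans (@logsum _ _ (fun y => K y z * u y) (fun y => K y z * 1) _ _ _) _.
  - by move=> y; apply: mulr_ge0.
  - by move=> y; rewrite mulr1.
  - by move=> y; rewrite mulr1; apply: contra => /eqP ->; rewrite mul0r.
  by apply: ler_sum => y _; rewrite ilogZ // ilogE xlog2xE divr1.
apply: le_trans (ler_sum _ (fun z _ => h z)) _.
rewrite exchange_big /=; apply: ler_sum => y _.
by rewrite -mulr_suml Kr mul1r.
Qed.

Lemma dpi {R : realType} {T : finType} (Q : T -> R) (W K : T -> T -> R) (u : T -> R) :
  (forall x, 0 <= Q x) -> (forall x y, 0 <= W x y) -> (forall y z, 0 <= K y z) ->
  (forall y, 0 <= u y) -> (forall x y, Q x * W x y != 0 -> u y != 0) ->
  (forall y, \sum_z K y z = 1) ->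
  \sum_x \sum_z ilog (Q x * \sum_y W x y * K y z) (Q x * \sum_y u y * K y z)
  <= \sum_x \sum_y ilog (Q x * W x y) (Q x * u y).
Proof.
move=> Q0 W0 K0 u0 supp Kr; apply: ler_sum => x _.
have h z : ilog (Q x * \sum_y W x y * K y z) (Q x * \sum_y u y * K y z)
   <= \sum_y K y z * ilog (Q x * W x y) (Q x * u y).
  rewrite !mulr_sumr.
  have -> : \sum_y Q x * (W x y * K y z) = \sum_y K y z * (Q x * W x y).
    by apply: eq_bigr => y _; ring.
  have -> : \sum_y Q x * (u y * K y z) = \sum_y K y z * (Q x * u y).
    by apply: eq_bigr => y _; ring.
  apply: le_trans (@logsum _ _ (fun y => K y z * (Q x * W x y)) (fun y => K y z * (Q x * u y)) _ _ _) _.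
  - by move=> y; apply: mulr_ge0 => //; apply: mulr_ge0.
  - by move=> y; apply: mulr_ge0 => //; apply: mulr_ge0.
  - move=> y; rewrite !mulf_eq0 !negb_or => /andP[-> /andP[qn wn]] /=.
    by rewrite qn (supp x y (mulf_neq0 qn wn)).
  by apply: ler_sum => y _; rewrite ilogZ.
apply: le_trans (ler_sum _ (fun z _ => h z)) _.
rewrite exchange_big /=; apply: ler_sum => y _.
by rewrite -mulr_suml Kr mul1r.
Qed.


Definition chout {R : realType} {T : finType} (Q : T -> R) (W : T -> T -> R) y :=
  \sum_x Q x * W x y.
Definition avg {R : realType} {T : finType} {M} (P : 'I_M -> T -> R) y :=
  (M%:R)^-1 * \sum_m P m y.

Lemma mi_ent1 {R : realType} {T : finType} (Q : T -> R) (W : T -> T -> R) Ha :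
  (forall x, 0 <= Q x) -> (forall x y, 0 <= W x y) -> \sum_x Q x = 1 ->
  (forall x, \sum_y xlog2x (W x y) = - Ha) ->
  \sum_x \sum_y ilog (Q x * W x y) (Q x * chout Q W y) = ent (chout Q W) - Ha.
Proof.
move=> Q0 W0 Q1 HW.
have pt x y : ilog (Q x * W x y) (Q x * chout Q W y) =
    Q x * xlog2x (W x y) - Q x * W x y * log2 (chout Q W y).
  rewrite ilogE xlog2xE.
  have [->|qn] := eqVneq (Q x) 0; first by rewrite !mul0r subrr.
  have [->|wn] := eqVneq (W x y) 0; first by rewrite !(mulr0, mul0r) subrr.
  have qp : 0 < Q x by rewrite lt_def qn Q0.
  have wp : 0 < W x y by rewrite lt_def wn W0.
  have up : 0 < chout Q W y.
    apply: lt_le_trans (mulr_gt0 qp wp) _.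
    by apply: (sum_ge_term (fun x => Q x * W x y)) => j; apply: mulr_ge0.
  have -> : Q x * W x y / (Q x * chout Q W y) = W x y / chout Q W y.
    by rewrite invfM mulrACA divff // mul1r.
  rewrite log2D //; ring.
rewrite (eq_bigr _ (fun x _ => eq_bigr _ (fun y _ => pt x y))).
under eq_bigr do rewrite sumrB -mulr_sumr HW.
rewrite sumrB -mulr_suml Q1 exchange_big /= /ent.
have -> : \sum_y \sum_x Q x * W x y * log2 (chout Q W y) =
          \sum_y xlog2x (chout Q W y).
  by apply: eq_bigr => y _; rewrite -mulr_suml xlog2xE.
lra.
Qed.

Lemma mi_avg {R : realType} {T : finType} M (P : 'I_M -> T -> R) :
  (0 < M)%N -> (forall m y, 0 <= P m y) ->
  \sum_m \sum_y (M%:R)^-1 * ilog (P m y) (avg P y) =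
  ent (avg P) - \sum_m (M%:R)^-1 * ent (P m).
Proof.
move=> M0 P0.
have Mp : 0 < (M%:R : R)^-1 by rewrite invr_gt0 ltr0n.
have pt m y : ilog (P m y) (avg P y) = xlog2x (P m y) - P m y * log2 (avg P y).
  rewrite ilogE xlog2xE.
  have [->|pn] := eqVneq (P m y) 0; first by rewrite !mul0r subrr.
  have pp : 0 < P m y by rewrite lt_def pn P0.
  have ap : 0 < avg P y.
    rewrite /avg; apply: mulr_gt0 => //; apply: lt_le_trans pp _.
    exact: (sum_ge_term (fun m => P m y)).
  by rewrite log2D // mulrBr.
under eq_bigr do under eq_bigr do rewrite pt mulrBr.
under eq_bigr do rewrite sumrB -mulr_sumr.
rewrite sumrB exchange_big /= /ent.
have -> : \sum_y \sum_m (M%:R)^-1 * (P m y * log2 (avg P y)) =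
          \sum_y xlog2x (avg P y).
  apply: eq_bigr => y _; rewrite xlog2xE /avg -mulr_sumr -mulr_suml mulrA //.
have -> : \sum_m (M%:R)^-1 * - \sum_y xlog2x (P m y) =
          - \sum_m (M%:R)^-1 * \sum_y xlog2x (P m y).
  by rewrite -sumrN; apply: eq_bigr => m _; rewrite mulrN.
lra.
Qed.

Lemma claim2 {R : realType} {T : finType} M (Q : 'I_M -> T -> R)
  (W V K : T -> T -> R) (Ha Hb : R) :
  (0 < M)%N -> (forall m x, 0 <= Q m x) -> (forall m, \sum_x Q m x = 1) ->
  (forall x y, 0 <= W x y) -> (forall y z, 0 <= K y z) ->
  (forall y, \sum_z K y z = 1) -> (forall z, \sum_y K y z = 1) ->
  (forall x z, V x z = \sum_y W x y * K y z) ->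
  (forall x, \sum_y xlog2x (W x y) = - Ha) ->
  (forall x, \sum_z xlog2x (V x z) = - Hb) ->
  \sum_m \sum_y (M%:R)^-1 * ilog (chout (Q m) W y) (avg (fun m => chout (Q m) W) y)
  - \sum_m \sum_z (M%:R)^-1 * ilog (chout (Q m) V z) (avg (fun m => chout (Q m) V) z)
  <= Hb - Ha.
Proof.
move=> M0 Q0 Q1 W0 K0 Kr Kc HV HW HVe.
have V0 x z : 0 <= V x z by rewrite HV; apply: sumr_ge0 => y _; apply: mulr_ge0.
have PY0 m y : 0 <= chout (Q m) W y by apply: sumr_ge0 => x _; apply: mulr_ge0.
have PZ0 m y : 0 <= chout (Q m) V y by apply: sumr_ge0 => x _; apply: mulr_ge0.
have eZ m z : chout (Q m) V z = \sum_y chout (Q m) W y * K y z.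
  rewrite /chout; under eq_bigr do rewrite HV mulr_sumr.
  rewrite exchange_big /=; apply: eq_bigr => y _; rewrite mulr_suml.
  by apply: eq_bigr => x _; rewrite mulrA.
rewrite (@mi_avg _ _ M _ M0 PY0) (@mi_avg _ _ M _ M0 PZ0).
have hA : ent (avg (fun m => chout (Q m) W)) <= ent (avg (fun m => chout (Q m) V)).
  rewrite /ent lerN2.
  have -> : \sum_z xlog2x (avg (fun m => chout (Q m) V) z) =
      \sum_z xlog2x (\sum_y avg (fun m => chout (Q m) W) y * K y z).
    apply: eq_bigr => z _; congr xlog2x.
    rewrite /avg; under eq_bigr do rewrite eZ.
    rewrite exchange_big /= mulr_sumr; apply: eq_bigr => y _.
    by rewrite -mulr_suml mulrA.
  apply: ent_dstoch => // y; rewrite /avg; apply: mulr_ge0.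
    by rewrite invr_ge0 ler0n.
  by apply: sumr_ge0.
have hB m : ent (chout (Q m) V) - ent (chout (Q m) W) <= Hb - Ha.
  have e1 := @mi_ent1 _ _ (Q m) W Ha (Q0 m) W0 (Q1 m) HW.
  have e2 := @mi_ent1 _ _ (Q m) V Hb (Q0 m) V0 (Q1 m) HVe.
  have supp x y : Q m x * W x y != 0 -> chout (Q m) W y != 0.
    move=> h; rewrite gt_eqF //; apply: lt_le_trans (_ : 0 < Q m x * W x y) _.
      by rewrite lt_def h mulr_ge0.
    by apply: (sum_ge_term (fun x => Q m x * W x y)) => j; apply: mulr_ge0.
  have d := @dpi _ _ (Q m) W K (chout (Q m) W) (Q0 m) W0 K0 (PY0 m) supp Kr.
  have : ent (chout (Q m) V) - Hb <= ent (chout (Q m) W) - Ha.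
    rewrite -e1 -e2; apply: le_trans _ d; rewrite le_eqVlt; apply/orP; left; apply/eqP.
    apply: eq_bigr => x _; apply: eq_bigr => z _; by rewrite eZ HV.
  lra.
have S : \sum_m (M%:R)^-1 * ent (chout (Q m) V) - \sum_m (M%:R)^-1 * ent (chout (Q m) W)
    <= Hb - Ha.
  rewrite -sumrB.
  have -> : Hb - Ha = \sum_(m < M) (M%:R)^-1 * (Hb - Ha).
    rewrite sumr_const card_ord -mulr_natr; field.
    by rewrite pnatr_eq0 -lt0n.
  apply: ler_sum => m _; rewrite -mulrBr ler_pM2l ?hB //.
  by rewrite invr_gt0 ltr0n.
lra.
Qed.

Lemma ilog_inv {R : realType} (A m : R) : 0 <= A -> 0 < m ->
  ilog A m^-1 = xlog2x A + A * log2 m.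
Proof.
move=> A0 mp; rewrite ilogE xlog2xE; have [->|An0] := eqVneq A 0.
  by rewrite !mul0r addr0.
have Ap : 0 < A by rewrite lt_def An0.
by rewrite invrK log2M // mulrDr.
Qed.

Lemma ilog_le1 {R : realType} (A B : R) : 0 <= A -> 0 <= B -> B <= 1 ->
  (A != 0 -> B != 0) -> xlog2x A <= ilog A B.
Proof.
move=> A0 B0 B1 AB; rewrite ilogE xlog2xE; have [->|An0] := eqVneq A 0.
  by rewrite !mul0r.
have Ap : 0 < A by rewrite lt_def An0.
have Bp : 0 < B by rewrite lt_def AB.
rewrite log2D // ler_pM2l //; have := log2_le0 _ B1; lra.
Qed.

Lemma binent {R : realType} (e : R) : 0 <= e -> e <= 1 ->
  -1 <= xlog2x e + xlog2x (1 - e).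
Proof.
move=> e0 e1.
have h := @logsum _ bool (fun b => if b then e else 1 - e) (fun _ => 2^-1).
rewrite !big_bool /= in h.
have e1' : 0 <= 1 - e by rewrite subr_ge0.
have ha : forall b : bool, 0 <= (if b then e else 1 - e) by case.
have hb : forall b : bool, 0 <= (2^-1 : R) by move=> _; rewrite invr_ge0 ler0n.
have hc : forall b : bool, (if b then e else 1 - e) != 0 -> (2^-1 : R) != 0.
  by move=> _ _; rewrite invr_eq0 pnatr_eq0.
have := h ha hb hc.
rewrite addrCA subrr addr0 -mulr2n -[2^-1 *+ 2]mulr_natr mulVf ?pnatr_eq0 //.
rewrite !ilog_inv ?ltr0n // log2_2 ilogE divr1 log2_1 mulr0 => H.
clear h ha hb hc; lra.
Qed.

Lemma sum_pair {R : realType} {I J : finType} (F : I * J -> R) :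
  \sum_i F i = \sum_m \sum_y F (m, y).
Proof. by rewrite pair_bigA; apply: eq_bigr => -[]. Qed.

Lemma mul_supp {R : realType} (x y z : R) : (y != 0 -> z != 0) -> x * y != 0 -> x * z != 0.
Proof. by move=> h; rewrite !mulf_eq0 !negb_or => /andP[-> /h]. Qed.

Lemma fano {R : realType} {T : finType} M (P : 'I_M -> T -> R) (dec : T -> 'I_M) :
  (0 < M)%N -> (forall m y, 0 <= P m y) -> (forall m, \sum_y P m y = 1) ->
  (1 - \sum_m \sum_y (M%:R)^-1 * P m y * (dec y != m)%:R) * log2 M%:R - 1
  <= \sum_m \sum_y (M%:R)^-1 * ilog (P m y) (avg P y).
Proof.
move=> M0 P0 P1.
set iM := (M%:R : R)^-1.
have iMp : 0 < iM by rewrite invr_gt0 ltr0n.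
have Mn0 : (M%:R : R) != 0 by rewrite pnatr_eq0 -lt0n.
pose c (i : 'I_M * T) : R := (dec i.2 == i.1)%:R.
pose a (i : 'I_M * T) : R := iM * P i.1 i.2.
pose b (i : 'I_M * T) : R := iM * avg P i.2.
have c0 i : 0 <= c i by rewrite /c; case: eqP.
have c1 i : 0 <= 1 - c i by rewrite /c; case: eqP; rewrite ?subrr ?subr0.
have a0 i : 0 <= a i by rewrite /a mulr_ge0 // ltW.
have avg0 y : 0 <= avg P y.
  by rewrite /avg mulr_ge0 ?sumr_ge0 // invr_ge0 ler0n.
have b0 i : 0 <= b i by rewrite /b mulr_ge0 // ltW.
have ab i : a i != 0 -> b i != 0.
  rewrite /a /b !mulf_eq0 !negb_or => /andP[-> h] /=.
  rewrite gt_eqF //; apply: lt_le_trans (_ : 0 < P i.1 i.2) _.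
    by rewrite lt_def h P0.
  exact: (sum_ge_term (fun m => P m i.2)).
have ca i : 0 <= c i * a i by apply: mulr_ge0.
have cb i : 0 <= c i * b i by apply: mulr_ge0.
have ca' i : 0 <= (1 - c i) * a i by apply: mulr_ge0.
have cb' i : 0 <= (1 - c i) * b i by apply: mulr_ge0.
have cab i : c i * a i != 0 -> c i * b i != 0 by apply: mul_supp; apply: ab.
have cab' i : (1 - c i) * a i != 0 -> (1 - c i) * b i != 0.
  by apply: mul_supp; apply: ab.
have eR : \sum_m \sum_y iM * ilog (P m y) (avg P y) =
    \sum_i ilog (c i * a i) (c i * b i) + \sum_i ilog ((1 - c i) * a i) ((1 - c i) * b i).
  rewrite -big_split pair_bigA /=; apply: eq_bigr => i _.
  rewrite (ilogZ (c0 i)) (ilogZ (c1 i)) -mulrDl [c i + _]addrC subrK mul1r.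
  by rewrite /a /b ilogZ // ltW.
have sa : \sum_i a i = 1.
  rewrite sum_pair /= /a; under eq_bigr do rewrite -mulr_sumr P1 mulr1.
  by rewrite sumr_const card_ord -mulr_natr mulVf.
have savg : \sum_y avg P y = 1.
  rewrite /avg -mulr_sumr exchange_big /=; under eq_bigr do rewrite P1.
  by rewrite sumr_const card_ord -mulr_natr mul1r mulVf.
have sb : \sum_i b i = 1.
  rewrite sum_pair /= /b; under eq_bigr do rewrite -mulr_sumr savg mulr1.
  by rewrite sumr_const card_ord -mulr_natr mulVf.
have scb : \sum_i c i * b i = iM.
  rewrite sum_pair /= exchange_big /= -[RHS]mulr1 -savg mulr_sumr.
  apply: eq_bigr => y _.
  rewrite (bigD1 (dec y)) //= big1 => [|m /negbTE hm].
    by rewrite /c /= eqxx mul1r addr0.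
  by rewrite /c /= eq_sym hm mul0r.
set e := \sum_m \sum_y _.
have eE : e = \sum_i (1 - c i) * a i.
  rewrite /e sum_pair; apply: eq_bigr => m _; apply: eq_bigr => y _.
  by rewrite /c /a; case: eqP => /=; rewrite ?subrr ?subr0 ?mul0r ?mul1r ?mulr0 ?mulr1 // mulrC.
have sca : \sum_i c i * a i = 1 - e.
  rewrite eE (_ : 1 - _ = \sum_i (a i - (1 - c i) * a i)); last by rewrite sumrB sa.
  by apply: eq_bigr => i _; ring.
have scb' : \sum_i (1 - c i) * b i = 1 - iM.
  rewrite (_ : 1 - iM = \sum_i (b i - c i * b i)); last by rewrite sumrB sb scb.
  by apply: eq_bigr => i _; ring.
have e0 : 0 <= e by rewrite eE sumr_ge0.
have e1 : e <= 1 by rewrite -subr_ge0 -sca sumr_ge0.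
rewrite eR.
have L1 : ilog (1 - e) iM <= \sum_i ilog (c i * a i) (c i * b i).
  by rewrite -sca -scb; apply: logsum.
have L2 : ilog e (1 - iM) <= \sum_i ilog ((1 - c i) * a i) ((1 - c i) * b i).
  by rewrite eE -scb'; apply: logsum.
rewrite ilog_inv ?ltr0n ?subr_ge0 // in L1.
have L3 : xlog2x e <= ilog e (1 - iM).
  apply: ilog_le1 => //.
  - by rewrite -scb' sumr_ge0.
  - by rewrite lerBlDr lerDl ltW.
  - rewrite -scb' eE => en0; exact: (sum_supp _ _ ca' cb' cab' en0).
have B := binent _ e0 e1.
clear -L1 L2 L3 B; lra.
Qed.


Lemma sum_prod {R : realType} (I : finType) (F : I -> bool -> R) :
  \sum_(f : {ffun I -> bool}) \prod_i F i (f i) = \prod_i (F i true + F i false).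
Proof. by rewrite -bigA_distr_bigA; apply: eq_bigr => i _; rewrite big_bool. Qed.

Lemma log2_prod {R : realType} (I : finType) (g : I -> R) :
  (forall i, 0 < g i) -> log2 (\prod_i g i) = \sum_i log2 (g i).
Proof.
move=> gp.
suff [] : 0 < \prod_i g i /\ log2 (\prod_i g i) = \sum_i log2 (g i) by [].
apply: (big_rec2 (fun x y => 0 < x /\ log2 x = y)).
  by rewrite log2_1.
move=> i x y _ [xp <-]; split; first by rewrite mulr_gt0.
by rewrite log2M.
Qed.

Lemma xlog_prod {R : realType} (I : finType) (g : I -> R) :
  (forall i, 0 <= g i) ->
  xlog2x (\prod_i g i) = \sum_j \prod_i (if i == j then xlog2x (g i) else g i).
Proof.
move=> g0.
have [k /eqP gk0|allp] := pickP (fun i => g i == 0).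
  rewrite (bigD1 k) //= gk0 mul0r xlog2xE mul0r big1 // => j _.
  by rewrite (bigD1 k) //=; case: (k == j); rewrite gk0 ?xlog2xE !mul0r.
have gp i : 0 < g i by rewrite lt_def g0 andbT; apply/negP => /eqP h; have := allp i; rewrite h eqxx.
rewrite xlog2xE log2_prod // mulr_sumr; apply: eq_bigr => j _.
rewrite (bigD1 j) //= [in RHS](bigD1 j) //= eqxx xlog2xE.
have -> : \prod_(i | i != j) (if i == j then xlog2x (g i) else g i) = \prod_(i | i != j) g i.
  by apply: eq_bigr => i /negbTE ->.
ring.
Qed.

Definition bsc {R : realType} (a : R) (u v : bool) : R := if u == v then 1 - a else a.

Lemma WbfE {R : realType} (pa pb : R) N B (s : states B) (x y : word N B) :
  Wbf pa pb s x y = \prod_i bsc (xover pa pb (s i.1)) (x i) (y i).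
Proof. by []. Qed.

Lemma Wbf_ge0 {R : realType} (pa pb : R) N B s (x y : word N B) :
  0 <= pa <= 1 -> 0 <= pb <= 1 -> 0 <= Wbf pa pb s x y.
Proof.
move=> /andP[a0 a1] /andP[b0 b1]; rewrite WbfE; apply: prodr_ge0 => i _.
by rewrite /bsc /xover; case: (s i.1); case: eqP; rewrite ?subr_ge0.
Qed.

Lemma Wbf_sum {R : realType} (pa pb : R) N B s (x : word N B) :
  \sum_y Wbf pa pb s x y = 1.
Proof.
rewrite /Wbf (sum_prod _ (fun i b => bsc (xover pa pb (s i.1)) (x i) b)).
by apply: big1 => i _; rewrite /bsc; case: (x i) => /=; ring.
Qed.

Lemma Wbf_sym {R : realType} (pa pb : R) N B s (x y : word N B) :
  Wbf pa pb s x y = Wbf pa pb s y x.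
Proof. by rewrite /Wbf; apply: eq_bigr => i _; rewrite eq_sym. Qed.

Lemma Wbf_ent {R : realType} (pa pb : R) N B s (x : word N B) :
  0 <= pa <= 1 -> 0 <= pb <= 1 ->
  \sum_y xlog2x (Wbf pa pb s x y) = - \sum_(i : 'I_B * 'I_N) Hb (xover pa pb (s i.1)).
Proof.
move=> ha hb.
have g0 (y : word N B) (i : 'I_B * 'I_N) : 0 <= bsc (xover pa pb (s i.1)) (x i) (y i).
  move: ha hb => /andP[a0 a1] /andP[b0 b1].
  by rewrite /bsc /xover; case: (s i.1); case: eqP; rewrite ?subr_ge0.
rewrite /Wbf; under eq_bigr => y _ do rewrite (xlog_prod _ _ (g0 y)).
rewrite exchange_big /= -sumrN; apply: eq_bigr => j _.
rewrite (sum_prod _ (fun i b => if i == j then xlog2x (bsc (xover pa pb (s i.1)) (x i) b)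
                               else bsc (xover pa pb (s i.1)) (x i) b)).
rewrite (bigD1 j) //= eqxx big1 => [|i /negbTE ->]; last first.
  by rewrite /bsc; case: (x i) => /=; ring.
by rewrite mulr1 /Hb /bsc; case: (x j) => /=; lra.
Qed.

Lemma Wbf_comp {R : realType} (pa pb ca cb ra rb : R) N B s (x z : word N B) :
  ra = pa + ca - 2 * pa * ca -> rb = pb + cb - 2 * pb * cb ->
  \sum_y Wbf pa pb s x y * Wbf ca cb s y z = Wbf ra rb s x z.
Proof.
move=> hra hrb.
under eq_bigr do rewrite /Wbf -big_split /=.
rewrite (sum_prod _ (fun i b => bsc (xover pa pb (s i.1)) (x i) b *
                               bsc (xover ca cb (s i.1)) b (z i))).
apply: eq_bigr => i _; rewrite /bsc /xover.
case: (s i.1); case: (x i); case: (z i) => /=; rewrite ?hra ?hrb; ring.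
Qed.


Definition cf {R : realType} (a b : R) : R :=
  if a == 1 / 2 then 0 else (b - a) / (1 - 2 * a).

Lemma cf_prop {R : realType} (a b : R) : 0 <= a -> a <= b -> b <= 1 / 2 ->
  (0 <= cf a b <= 1) /\ b = a + cf a b - 2 * a * cf a b.
Proof.
move=> a0 ab b2; rewrite /cf; case: eqP => [ha|ha].
  split; first by rewrite lexx ler01.
  rewrite ha in ab *; lra.
have a2 : a < 1 / 2 by rewrite lt_neqAle; apply/andP; split; [apply/eqP; exact: ha|lra].
have d0 : 0 < 1 - 2 * a by lra.
split; last by field; lra.
apply/andP; split; first by apply: divr_ge0; lra.
by rewrite ler_pdivrMr // mul1r; lra.
Qed.

Lemma Pstate_ge0 {R : realType} (q1 : R) B (s : states B) :
  0 <= q1 -> q1 <= 1 -> 0 <= Pstate q1 s.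
Proof.
by move=> h0 h1; apply: prodr_ge0 => k _; rewrite /st_prob; case: (s k); lra.
Qed.

Lemma Pstate_marg {R : realType} (q1 : R) {B} (f : bool -> R) (k0 : 'I_B) :
  \sum_(s : states B) Pstate q1 s * f (s k0) = q1 * f false + (1 - q1) * f true.
Proof.
have e s : Pstate q1 s * f (s k0) =
    \prod_k (st_prob q1 (s k) * (if k == k0 then f (s k) else 1)).
  rewrite big_split /=; congr (_ * _).
  by rewrite (bigD1 k0) //= eqxx big1 ?mulr1 // => k /negbTE ->.
rewrite (eq_bigr _ (fun s _ => e s)).
rewrite (sum_prod _ (fun k b => st_prob q1 b * (if k == k0 then f b else 1))).
rewrite (bigD1 k0) //= eqxx big1 => [|k /negbTE ->]; last by rewrite /st_prob; ring.
by rewrite mulr1 /st_prob; ring.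
Qed.

Lemma Pstate_sum {R : realType} (q1 : R) B : \sum_(s : states B) Pstate q1 s = 1.
Proof.
case: B => [|B].
  rewrite (eq_bigr (fun _ => 1)) ?sumr_const; last by move=> s _; rewrite /Pstate big_ord0.
  by rewrite card_ffun card_ord card_bool expn0.
have := Pstate_marg q1 (fun _ => 1) (@ord0 B).
rewrite (eq_bigr (fun s => Pstate q1 s)) => [->|s _]; last by rewrite mulr1.
ring.
Qed.

Lemma errE {R : realType} (q1 p1 p2 : R) N B M (c : Defs.code R N B M) :
  err_prob q1 p1 p2 c = \sum_(s : states B) Pstate q1 s *
    \sum_m \sum_y (M%:R)^-1 * chout (enc c m) (Wbf p1 p2 s) y * (dec c y s != m)%:R.
Proof.
rewrite /err_prob exchange_big /=; apply: eq_bigr => s _.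
rewrite mulr_sumr; apply: eq_bigr => m _; rewrite mulr_sumr exchange_big /=.
apply: eq_bigr => y _; rewrite /chout mulr_sumr !mulr_suml mulr_sumr.
by apply: eq_bigr => x _; ring.
Qed.

Lemma leakE {R : realType} (q1 ps1 ps2 : R) N B M (c : Defs.code R N B M) :
  leakage q1 ps1 ps2 c = \sum_(s : states B) Pstate q1 s *
    \sum_m \sum_z (M%:R)^-1 * ilog (chout (enc c m) (Wbf ps1 ps2 s) z)
         (avg (fun m => chout (enc c m) (Wbf ps1 ps2 s)) z).
Proof. by []. Qed.

Lemma key {R : realType} (q1 p1 p2 ps1 ps2 : R) N B M (c : Defs.code R N B M) :
  0 <= q1 -> q1 <= 1 -> 0 <= p1 -> p1 <= ps1 -> ps1 <= 1 / 2 ->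
  0 <= p2 -> p2 <= ps2 -> ps2 <= 1 / 2 -> (0 < M)%N ->
  (1 - err_prob q1 p1 p2 c) * log2 M%:R
  <= 1 + leakage q1 ps1 ps2 c +
     (N * B)%:R * (q1 * (Hb ps1 - Hb p1) + (1 - q1) * (Hb ps2 - Hb p2)).
Proof.
move=> q10 q11 p10 p1s ps1h p20 p2s ps2h M0.
have [[/andP[c10 c11] e1] [/andP[c20 c21] e2]] :=
  (cf_prop _ _ p10 p1s ps1h, cf_prop _ _ p20 p2s ps2h).
set c1 := cf p1 ps1 in c10 c11 e1; set c2 := cf p2 ps2 in c20 c21 e2.
have hp1 : 0 <= p1 <= 1 by apply/andP; split; lra.
have hp2 : 0 <= p2 <= 1 by apply/andP; split; lra.
have hs1 : 0 <= ps1 <= 1 by apply/andP; split; lra.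
have hs2 : 0 <= ps2 <= 1 by apply/andP; split; lra.
have hc1 : 0 <= c1 <= 1 by apply/andP; split.
have hc2 : 0 <= c2 <= 1 by apply/andP; split.
pose Hs (a b : R) (s : states B) := \sum_(i : 'I_B * 'I_N) Hb (xover a b (s i.1)).
pose e s := \sum_m \sum_y (M%:R)^-1 * chout (enc c m) (Wbf p1 p2 s) y * (dec c y s != m)%:R.
pose IY s := \sum_m \sum_y (M%:R)^-1 * ilog (chout (enc c m) (Wbf p1 p2 s) y)
         (avg (fun m => chout (enc c m) (Wbf p1 p2 s)) y).
pose L s := \sum_m \sum_z (M%:R)^-1 * ilog (chout (enc c m) (Wbf ps1 ps2 s) z)
         (avg (fun m => chout (enc c m) (Wbf ps1 ps2 s)) z).
have F s : (1 - e s) * log2 M%:R - 1 <= IY s.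
  apply: (@fano _ _ M (fun m => chout (enc c m) (Wbf p1 p2 s)) (fun y => dec c y s) M0).
  - move=> m y; apply: sumr_ge0 => x _; apply: mulr_ge0; first exact: enc_ge0.
    exact: Wbf_ge0.
  - move=> m; rewrite /chout exchange_big /=.
    under eq_bigr do rewrite -mulr_sumr Wbf_sum mulr1.
    exact: enc_sum1.
have G s : IY s - L s <= Hs ps1 ps2 s - Hs p1 p2 s.
  apply: (@claim2 _ _ M (enc c) (Wbf p1 p2 s) (Wbf ps1 ps2 s) (Wbf c1 c2 s)).
  - exact: M0.
  - exact: enc_ge0.
  - exact: enc_sum1.
  - by move=> x y; apply: Wbf_ge0.
  - by move=> x y; apply: Wbf_ge0.
  - by move=> y; apply: Wbf_sum.
  - by move=> z; under eq_bigr do rewrite Wbf_sym; apply: Wbf_sum.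
  - by move=> x z; symmetry; apply: Wbf_comp.
  - by move=> x; apply: Wbf_ent.
  - by move=> x; apply: Wbf_ent.
have H s : Pstate q1 s * ((1 - e s) * log2 M%:R - 1 - L s)
    <= Pstate q1 s * (Hs ps1 ps2 s - Hs p1 p2 s).
  by apply: ler_wpM2l; [exact: Pstate_ge0|have := F s; have := G s; lra].
have S : \sum_s Pstate q1 s * ((1 - e s) * log2 M%:R - 1 - L s)
    <= \sum_s Pstate q1 s * (Hs ps1 ps2 s - Hs p1 p2 s).
  by apply: ler_sum => s _; exact: H.
have E1 : \sum_s Pstate q1 s * (Hs ps1 ps2 s - Hs p1 p2 s) =
    (N * B)%:R * (q1 * (Hb ps1 - Hb p1) + (1 - q1) * (Hb ps2 - Hb p2)).
  under eq_bigr do rewrite /Hs -sumrB mulr_sumr.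
  rewrite exchange_big /=.
  rewrite (eq_bigr (fun _ => q1 * (Hb ps1 - Hb p1) + (1 - q1) * (Hb ps2 - Hb p2))).
    by rewrite sumr_const card_prod !card_ord [(B * N)%N]mulnC mulr_natl.
  move=> i _.
  exact: (Pstate_marg q1 (fun b => Hb (xover ps1 ps2 b) - Hb (xover p1 p2 b)) i.1).
have E2 : \sum_s Pstate q1 s * ((1 - e s) * log2 M%:R - 1 - L s) =
   log2 M%:R - (\sum_s Pstate q1 s * e s) * log2 M%:R - 1 - \sum_s Pstate q1 s * L s.
  set lM := log2 M%:R.
  rewrite (eq_bigr (fun s => Pstate q1 s * lM - (Pstate q1 s * e s) * lM - Pstate q1 s
     - Pstate q1 s * L s)); last by move=> s _; ring.
  by rewrite !sumrB -!mulr_suml Pstate_sum mul1r.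
rewrite E1 E2 in S.
have -> : err_prob q1 p1 p2 c = \sum_s Pstate q1 s * e s by rewrite errE.
have -> : leakage q1 ps1 ps2 c = \sum_s Pstate q1 s * L s by [].
clear -S; lra.
Qed.


Theorem lemma1 (R : realType) (q1 q2 p1 p2 ps1 ps2 : R) :
  0 <= q1 -> q1 <= 1 -> q2 = 1 - q1 ->
  0 <= p1 -> p1 <= p2 -> p2 <= 1 / 2 ->
  0 <= ps1 -> ps1 <= ps2 -> ps2 <= 1 / 2 ->
  p1 <= ps1 -> p2 <= ps2 ->
  (CsCSID q1 p1 p2 ps1 ps2
     <= (q1 * (Hb ps1 - Hb p1) + q2 * (Hb ps2 - Hb p2))%:E)%E.
Proof.
move=> q10 q11 q2E p10 p12 p2h ps10 ps12 ps2h p1ps1 p2ps2.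
rewrite q2E; set C := q1 * (Hb ps1 - Hb p1) + (1 - q1) * (Hb ps2 - Hb p2).
apply: ge_ereal_sup => _ [r hr <-]; rewrite lee_fin.
rewrite leNgt; apply/negP => hlt.
set d := r - C.
have dp : 0 < d by rewrite /d subr_gt0.
have r3 : 0 < `|r| + 3 by apply: ltr_wpDl => //; rewrite ltr0n.
set eps := Num.min (1 / 2) (d / (2 * (`|r| + 3))).
have epsp : 0 < eps.
  rewrite /eps lt_min; apply/andP; split; first by rewrite divr_gt0 ?ltr0n.
  by rewrite divr_gt0 // mulr_gt0 // ltr0n.
have [eps1 eps2] : eps <= 1 / 2 /\ eps <= d / (2 * (`|r| + 3)).
  by have := le_refl eps; rewrite {2}/eps le_min => /andP[].
have eps3 : eps * (`|r| + 3) <= d / 2.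
  move: eps2; rewrite ler_pdivlMr ?mulr_gt0 ?ltr0n // => h.
  rewrite ler_pdivlMr ?ltr0n //; lra.
set n0 := (Num.Def.trunc eps^-1).+1.
have [N [B [M [c [[hN hB hM] [hrate herr hleak]]]]]] := hr eps epsp 1%N n0.
have Np : (0 < N)%N by [].
have Bn0 : (n0 <= B)%N by [].
set NB := ((N * B)%:R : R).
have NBB : (B%:R : R) <= NB.
  rewrite /NB natrM ler_peMl // ?ler0n // ler1n //.
have n0e : eps^-1 < (n0%:R : R) by apply: truncnS_gt.
have NBe : eps^-1 < NB.
  apply: lt_le_trans n0e (le_trans _ NBB); by rewrite ler_nat.
have NBp : 0 < NB by apply: lt_trans NBe; rewrite invr_gt0.
have h4 : 1 < eps * NB.
  by rewrite -(mulfV (negbT (gt_eqF epsp))) ltr_pM2l.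
have K := @key _ q1 p1 p2 ps1 ps2 N B M c q10 q11 p10 p1ps1 (le_trans ps12 ps2h) (le_trans p10 p12) p2ps2 ps2h hM.
rewrite -/C -/NB in K.
set lM := log2 (M%:R : R) in K hrate.
set err := err_prob q1 p1 p2 c in K herr.
set leak := leakage q1 ps1 ps2 c in K hleak.
have lM0 : 0 <= lM.
  rewrite /lM /log2 mulr_ge0 ?invr_ge0 ?ln_ge0 ?ler1n //; exact: ltW (ln2_gt0 _).
have h3 : leak <= eps * NB by move: hleak; rewrite -/NB ler_pdivrMr.
have hr2 : (r - eps) * NB <= lM by move: hrate; rewrite /rate -/lM -/NB ler_pdivlMr.
have h1 : (1 - eps) * lM <= (1 - err) * lM by rewrite ler_wpM2r // lerB.
have h2 : (1 - eps) * ((r - eps) * NB) <= (1 - eps) * lM.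
  by rewrite ler_wpM2l // subr_ge0; apply: le_trans eps1 _; lra.
have X : ((1 - eps) * (r - eps) - 2 * eps - C) * NB < 0.
  have -> : ((1 - eps) * (r - eps) - 2 * eps - C) * NB =
     (1 - eps) * ((r - eps) * NB) - 2 * (eps * NB) - NB * C by ring.
  clear -K h1 h2 h3 h4; lra.
rewrite pmulr_llt0 // in X.
have er : eps * r <= eps * `|r| by rewrite ler_wpM2l ?ler_norm // ltW.
have ee : 0 <= eps * eps by rewrite mulr_ge0 // ltW.
have : r - C < eps * (`|r| + 3).
  have E : (1 - eps) * (r - eps) = r - eps * r - eps + eps * eps by ring.
  have E2 : eps * (`|r| + 3) = eps * `|r| + 3 * eps by ring.
  rewrite E in X; rewrite E2; clear -X er ee; lra.
move: eps3; rewrite -/d; clear -dp; lra.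
Qed.
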